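(* Let $t_1<t_2$, let $u:[t_1,t_2]\to\mathcal C$ be measurable and $p:[t_1,t_2]\to\mathbb R^3$ absolutely continuous with $\frac{dp}{dt}=p(t)\times u(t)$ and $\mathcal H(p(t),u(t))=\mathcal M(p(t))=0$ for almost all $t$. (a) If $p(t)=S-\kappa Q+z(t)Z$ for all $t\in[t_1,t_2]$, then $z(t)=0$ on $[t_1,t_2]$ and $u(t)=W_+/(1+\kappa c+\kappa+c)$ for almost all $t$. (b) If $\kappa>0$ and $p(t)=S+\kappa Q+z(t)Z$ for all $t\in[t_1,t_2]$, then $\kappa\ge c$, $z(t)=0$ on $[t_1,t_2]$ and $u(t)$ is the positive multiple of $W_-$ lying in $\mathcal C$ for almost all $t$. Analogously, if $p(t)=-S+\kappa Q+z(t)Z$ (resp. $p(t)=-S-\kappa Q+z(t)Z$ with $\kappa>0$) on $[t_1,t_2]$, then $z\equiv0$ and $u(t)$ is the multiple of $-W_+$ (resp. $-W_-$) lying in $\mathcal C$.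
   Context: Fix unit vectors $X,Y\in\mathbb R^3$ with angle $\alpha\in(0,\pi/2]$, $c=\cos\alpha$, and $\kappa\in[0,1]$. Let $Z=X\times Y$, $S=X-cY$, $Q=Y-cX$. Let $\mathcal C=\{aX+bY:|a|+|b|=1\}$, $\mathrm{cost}(aX+bY)=|a|+\kappa|b|$, $\mathcal H(p,u)=-\sin^2(\alpha)\mathrm{cost}(u)+(p,u)$, $\mathcal M(p)=\max_{u\in\mathcal C}\mathcal H(p,u)$. $W_+=(1+\kappa c)X-(\kappa+c)Y$ and $W_-=(1-\kappa c)X+(\kappa-c)Y$. *)

(* Defs.v *)
From Stdlib Require Import Reals Lra.
Open Scope R_scope.

Record V3 := mkV3 { vx : R; vy : R; vz : R }.

Definition vadd (u v : V3) := mkV3 (vx u + vx v) (vy u + vy v) (vz u + vz v).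
Definition vscale (a : R) (u : V3) := mkV3 (a * vx u) (a * vy u) (a * vz u).
Definition vopp (u : V3) := vscale (-1) u.
Definition vsub (u v : V3) := vadd u (vopp v).
Definition dot (u v : V3) := vx u * vx v + vy u * vy v + vz u * vz v.
Definition cross (u v : V3) :=
  mkV3 (vy u * vz v - vz u * vy v)
       (vz u * vx v - vx u * vz v)
       (vx u * vy v - vy u * vx v).

(* c = cos alpha = (X,Y) for unit vectors X, Y at angle alpha *)
Definition Zv (X Y : V3) := cross X Y.
Definition Sv (X Y : V3) (c : R) := vsub X (vscale c Y).
Definition Qv (X Y : V3) (c : R) := vsub Y (vscale c X).
Definition Wplus (X Y : V3) (c k : R) :=
  vsub (vscale (1 + k * c) X) (vscale (k + c) Y).
Definition Wminus (X Y : V3) (c k : R) :=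
  vadd (vscale (1 - k * c) X) (vscale (k - c) Y).

Definition inC (X Y : V3) (u : V3) : Prop :=
  exists a b, u = vadd (vscale a X) (vscale b Y) /\ Rabs a + Rabs b = 1.

(* cost(aX + bY) = |a| + k |b| ; the coefficients a, b of u in span(X,Y)
   are recovered from the Gram system (X,Y independent). *)
Definition coefX (X Y u : V3) :=
  (dot u X - dot X Y * dot u Y) / (1 - (dot X Y) ^ 2).
Definition coefY (X Y u : V3) :=
  (dot u Y - dot X Y * dot u X) / (1 - (dot X Y) ^ 2).
Definition cost (X Y : V3) (k : R) (u : V3) :=
  Rabs (coefX X Y u) + k * Rabs (coefY X Y u).

Definition Ham (X Y : V3) (alpha k : R) (p u : V3) :=
  - (sin alpha) ^ 2 * cost X Y k u + dot p u.

(* "M(p) = m" : m is the maximum of H(p, .) over C *)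
Definition Mis (X Y : V3) (alpha k : R) (p : V3) (m : R) : Prop :=
  (exists u, inC X Y u /\ Ham X Y alpha k p u = m) /\
  (forall u, inC X Y u -> Ham X Y alpha k p u <= m).

Fixpoint sumN (f : nat -> R) (n : nat) : R :=
  match n with O => 0 | S m => sumN f m + f m end.

Definition outer_le (E : R -> Prop) (eps : R) : Prop :=
  exists a b : nat -> R,
    (forall n, a n <= b n) /\
    (forall x, E x -> exists n, a n < x < b n) /\
    (forall n, sumN (fun i => b i - a i) n <= eps).

Definition null_set (E : R -> Prop) : Prop :=
  forall eps, 0 < eps -> outer_le E eps.

(* Lebesgue measurability (Stein-Shakarchi definition):
   for all eps > 0 there is an open G containing E with m*(G \ E) <= eps *)
Definition lmeasurable (E : R -> Prop) : Prop :=
  forall eps, 0 < eps ->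
    exists G : R -> Prop, open_set G /\ (forall x, E x -> G x) /\
      outer_le (fun x => G x /\ ~ E x) eps.

Definition measurable_on (t1 t2 : R) (f : R -> R) : Prop :=
  forall r, lmeasurable (fun t => t1 <= t <= t2 /\ f t < r).

Definition measurable_on_V3 (t1 t2 : R) (f : R -> V3) : Prop :=
  measurable_on t1 t2 (fun t => vx (f t)) /\
  measurable_on t1 t2 (fun t => vy (f t)) /\
  measurable_on t1 t2 (fun t => vz (f t)).

Definition abs_cont_on (t1 t2 : R) (f : R -> R) : Prop :=
  forall eps, 0 < eps -> exists delta, 0 < delta /\
    forall (n : nat) (a b : nat -> R),
      (forall i, (i < n)%nat -> t1 <= a i /\ a i <= b i /\ b i <= t2) ->
      (forall i j, (i < j)%nat -> (j < n)%nat -> b i <= a j) ->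
      sumN (fun i => b i - a i) n < delta ->
      sumN (fun i => Rabs (f (b i) - f (a i))) n < eps.

Definition abs_cont_on_V3 (t1 t2 : R) (f : R -> V3) : Prop :=
  abs_cont_on t1 t2 (fun t => vx (f t)) /\
  abs_cont_on t1 t2 (fun t => vy (f t)) /\
  abs_cont_on t1 t2 (fun t => vz (f t)).

Definition ae_on (t1 t2 : R) (P : R -> Prop) : Prop :=
  exists N, null_set N /\ forall t, t1 <= t <= t2 -> ~ N t -> P t.

Definition has_deriv_V3 (p : R -> V3) (t : R) (v : V3) : Prop :=
  derivable_pt_lim (fun s => vx (p s)) t (vx v) /\
  derivable_pt_lim (fun s => vy (p s)) t (vy v) /\
  derivable_pt_lim (fun s => vz (p s)) t (vz v).

(* Main.v *)
Require Import Defs.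
From Stdlib Require Import Reals Lra Lia Psatz Classical FunctionalExtensionality.
Open Scope R_scope.

Lemma sumN_ext f g n : (forall i, (i < n)%nat -> f i = g i) -> sumN f n = sumN g n.
Proof. induction n; simpl; intros H; [reflexivity|]. rewrite IHn by (intros; apply H; lia). rewrite H by lia. reflexivity. Qed.

Lemma sumN_upd f g j n : (j < n)%nat ->
  sumN (fun i => if Nat.eqb i j then g else f i) n = sumN f n - f j + g.
Proof.
  induction n; intros Hj; [lia|]. simpl.
  destruct (Nat.eq_dec j n) as [-> |Hne].
  - rewrite Nat.eqb_refl. rewrite (sumN_ext _ f n). lra.
    intros i Hi. destruct (Nat.eqb_spec i n); [lia|reflexivity].
  - rewrite IHn by lia. destruct (Nat.eqb_spec n j); [lia|]. lra.
Qed.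

Lemma sumN_ge_term f n j : (forall i, 0 <= f i) -> (j < n)%nat -> f j <= sumN f n.
Proof.
  intros Hf. induction n; intros Hj; [lia|]. simpl.
  assert (0 <= sumN f n).
  { clear IHn Hj. induction n; simpl; [lra|]. specialize (Hf n). lra. }
  destruct (Nat.eq_dec j n) as [-> |Hne]; [lra|].
  specialize (IHn ltac:(lia)). specialize (Hf n). lra.
Qed.

Lemma finite_cover : forall n (a b : nat -> R) x y,
  (forall i, a i <= b i) -> x <= y ->
  (forall s, x <= s <= y -> exists i, (i < n)%nat /\ a i < s < b i) ->
  y - x < sumN (fun i => b i - a i) n.
Proof.
  induction n; intros a b x y Hab Hxy Hc.
  - destruct (Hc x) as [i [Hi _]]; [lra| lia].
  - destruct (Hc y) as [j [Hj [Haj Hbj]]]; [lra|].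
    destruct (Rlt_or_le (a j) x) as [Hlt|Hle].
    + assert (b j - a j <= sumN (fun i => b i - a i) (S n)).
      { apply (sumN_ge_term (fun i => b i - a i)); [intros i; specialize (Hab i); lra | exact Hj]. }
      lra.
    + set (a' := fun i => if Nat.eqb i j then a n else a i).
      set (b' := fun i => if Nat.eqb i j then b n else b i).
      assert (IH : a j - x < sumN (fun i => b' i - a' i) n).
      { apply IHn; [intros i; unfold a', b'; destruct (Nat.eqb i j); apply Hab | exact Hle | ].
        intros s Hs. destruct (Hc s) as [i [Hi Hin]]; [lra|].
        destruct (Nat.eq_dec i j) as [-> |Hij]; [lra|].
        destruct (Nat.eq_dec i n) as [-> |Hin'].
        - exists j. split; [lia|]. unfold a', b'. rewrite Nat.eqb_refl. exact Hin.
        - exists i. split; [lia|]. unfold a', b'. destruct (Nat.eqb_spec i j); [lia|]. exact Hin. }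
      simpl (sumN _ (S n)).
      destruct (Nat.eq_dec j n) as [-> |Hjn].
      * rewrite (sumN_ext (fun i => b' i - a' i) (fun i => b i - a i)) in IH. lra.
        intros i Hi; unfold a', b'; destruct (Nat.eqb_spec i n); [lia|reflexivity].
      * rewrite (sumN_ext (fun i => b' i - a' i) (fun i => if Nat.eqb i j then b n - a n else b i - a i)) in IH.
        rewrite (sumN_upd (fun i => b i - a i)) in IH by lia. lra.
        intros i Hi; unfold a', b'; destruct (Nat.eqb i j); reflexivity.
Qed.

Lemma HB (a b : nat -> R) x y : x <= y ->
  (forall s, x <= s <= y -> exists n, a n < s < b n) ->
  exists M, forall s, x <= s <= y -> exists i, (i < M)%nat /\ a i < s < b i.
Proof.
  intros Hxy Hc.
  set (E := fun t => x <= t <= y /\ exists M, forall s, x <= s <= t -> exists i, (i < M)%nat /\ a i < s < b i).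
  assert (HEx : E x).
  { split; [lra|]. destruct (Hc x) as [n0 Hn0]; [lra|]. exists (S n0). intros s Hs. exists n0. split; [lia|]. replace s with x by lra. exact Hn0. }
  assert (Hb : bound E). { exists y. intros t [Ht _]. lra. }
  destruct (completeness E Hb (ex_intro _ x HEx)) as [sg [Hub Hlub]].
  assert (Hxs : x <= sg) by (apply Hub; exact HEx).
  assert (Hsy : sg <= y) by (apply Hlub; intros t [Ht _]; lra).
  destruct (Hc sg) as [j [Haj Hbj]]; [lra|].
  assert (Ht : exists t, E t /\ a j < t).
  { apply NNPP; intro Hn. assert (sg <= a j). { apply Hlub. intros t Et. apply Rnot_lt_le. intro Hl. apply Hn. exists t; auto. } lra. }
  destruct Ht as [t [[Ht [M HM]] Hat]].
  assert (Hcov : forall t', t' < b j -> forall s, x <= s <= t' -> exists i, (i < Nat.max M (S j))%nat /\ a i < s < b i).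
  { intros t' Ht' s Hs. destruct (Rle_or_lt s t) as [Hst|Hst].
    - destruct (HM s) as [i [Hi Hin]]; [lra|]. exists i; split; [lia|auto].
    - exists j; split; [lia|lra]. }
  destruct (Rle_or_lt y ((sg + b j)/2)) as [Hy|Hy].
  - exists (Nat.max M (S j)). intros s Hs. apply (Hcov y); lra.
  - exfalso. assert (E ((sg + b j)/2)). { split; [lra|]. exists (Nat.max M (S j)). apply Hcov. lra. }
    assert ((sg + b j)/2 <= sg) by (apply Hub; auto). lra.
Qed.

Lemma nonnull N x y : null_set N -> x < y -> exists t, x < t < y /\ ~ N t.
Proof.
  intros HN Hxy. apply NNPP; intro Hn.
  destruct (HN ((y - x)/2)) as [a [b [Hab [Hcov Hsum]]]]; [lra|].
  set (x' := x + (y-x)/4). set (y' := y - (y-x)/4).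
  destruct (HB a b x' y') as [M HM]; [unfold x',y'; lra| |].
  { intros s Hs. apply Hcov. apply NNPP; intro HNs. apply Hn. exists s. split; [unfold x',y' in Hs; lra | exact HNs]. }
  assert (Hx : x' <= y') by (unfold x', y'; lra).
  pose proof (finite_cover M a b x' y' Hab Hx HM).
  specialize (Hsum M). unfold x', y' in *. lra.
Qed.

Lemma sumN_shift g n : sumN g (S n) = g O + sumN (fun i => g (S i)) n.
Proof. induction n; simpl in *; [lra|]. rewrite IHn. lra. Qed.

Lemma null_add_pt N p0 : null_set N -> null_set (fun t => N t \/ t = p0).
Proof.
  intros HN eps He. destruct (HN (eps/2)) as [a [b [Hab [Hcov Hsum]]]]; [lra|].
  exists (fun n => match n with O => p0 - eps/4 | S m => a m end),
         (fun n => match n with O => p0 + eps/4 | S m => b m end).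
  split; [intros m; destruct m; [lra|apply Hab]|split].
  - intros x [Hx| ->].
    + destruct (Hcov x Hx) as [n Hn]. exists (S n). exact Hn.
    + exists O. lra.
  - intros [|n].
    + simpl. lra.
    + rewrite sumN_shift. simpl. specialize (Hsum n). lra.
Qed.

Lemma ac_cont t1 t2 f t0 : abs_cont_on t1 t2 f -> t1 <= t0 <= t2 ->
  forall eps, 0 < eps -> exists d, 0 < d /\ forall s, t1 <= s <= t2 -> Rabs (s - t0) < d -> Rabs (f s - f t0) < eps.
Proof.
  intros Hac Ht0 eps He. destruct (Hac eps He) as [d [Hd H]]. exists d. split; [exact Hd|].
  intros s Hs Hst. apply Rabs_def2 in Hst.
  destruct (Rle_or_lt s t0) as [Hle|Hlt].
  - specialize (H 1%nat (fun _ => s) (fun _ => t0)). simpl in H.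
    rewrite Rabs_minus_sym.
    assert (0 + Rabs (f t0 - f s) < eps); [|lra].
    apply H; [intros i Hi; lra | intros i j Hij Hj; lia | lra].
  - specialize (H 1%nat (fun _ => t0) (fun _ => s)). simpl in H.
    assert (0 + Rabs (f s - f t0) < eps); [|lra].
    apply H; [intros i Hi; lra | intros i j Hij Hj; lia | lra].
Qed.

Lemma ae_const t1 t2 f N f0 t0 : abs_cont_on t1 t2 f -> null_set N -> t1 < t2 -> t1 <= t0 <= t2 ->
  (forall s, t1 < s < t2 -> ~ N s -> f s = f0) -> f t0 = f0.
Proof.
  intros Hac HN Ht Ht0 Hs. apply NNPP; intro Hne.
  assert (Hd : 0 < Rabs (f t0 - f0)) by (apply Rabs_pos_lt; intro; apply Hne; lra).
  destruct (ac_cont t1 t2 f t0 Hac Ht0 _ Hd) as [d [Hd0 Hd1]].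
  destruct (nonnull N (Rmax t1 (t0 - d)) (Rmin t2 (t0 + d)) HN) as [s [Hs1 Hs2]].
  { unfold Rmax, Rmin; repeat destruct (Rle_dec _ _); lra. }
  assert (t1 < s < t2 /\ t0 - d < s < t0 + d) by (revert Hs1; unfold Rmax, Rmin; repeat destruct (Rle_dec _ _); lra).
  specialize (Hd1 s ltac:(lra) ltac:(apply Rabs_def1; lra)).
  rewrite (Hs s ltac:(lra) Hs2) in Hd1. rewrite Rabs_minus_sym in Hd1. lra.
Qed.

Lemma ae_exists t1 t2 P : ae_on t1 t2 P -> t1 < t2 -> exists t, t1 <= t <= t2 /\ P t.
Proof.
  intros [N [HN HP]] Ht. destruct (nonnull N t1 t2 HN Ht) as [t [Ht1 Ht2]].
  exists t. split; [lra|]. apply HP; [lra|exact Ht2].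
Qed.

Lemma deriv_const_on f t1 t2 t C l : (forall s, t1 <= s <= t2 -> f s = C) -> t1 < t < t2 ->
  derivable_pt_lim f t l -> l = 0.
Proof.
  intros Hc Ht Hd. apply (uniqueness_limite f t l 0 Hd).
  intros eps He.
  assert (Hm : 0 < Rmin (t - t1) (t2 - t)) by (unfold Rmin; destruct (Rle_dec _ _); lra).
  exists (mkposreal _ Hm). intros h Hh0 Hh. simpl in Hh. apply Rabs_def2 in Hh.
  assert (t - t1 >= Rmin (t - t1) (t2 - t) /\ t2 - t >= Rmin (t - t1) (t2 - t)) by (unfold Rmin; destruct (Rle_dec _ _); lra).
  rewrite (Hc (t + h)) by lra. rewrite (Hc t) by lra.
  replace ((C - C) / h - 0) with 0 by (field; auto). rewrite Rabs_R0; lra.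
Qed.

Lemma deriv_mulc f t l a : derivable_pt_lim f t l -> derivable_pt_lim (fun s => f s * a) t (l * a).
Proof.
  intros H. replace (fun s => f s * a) with (mult_real_fct a f).
  - replace (l * a) with (a * l) by ring. apply derivable_pt_lim_scal; auto.
  - apply functional_extensionality; intro s; unfold mult_real_fct; ring.
Qed.

Lemma deriv_dot p t w n : has_deriv_V3 p t w -> derivable_pt_lim (fun s => dot (p s) n) t (dot w n).
Proof.
  intros [Hx [Hy Hz]]. unfold dot.
  apply (derivable_pt_lim_plus (fun s => vx (p s) * vx n + vy (p s) * vy n) (fun s => vz (p s) * vz n)).
  - apply (derivable_pt_lim_plus (fun s => vx (p s) * vx n) (fun s => vy (p s) * vy n));
    apply deriv_mulc; auto.
  - apply deriv_mulc; auto.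
Qed.

Lemma V3eq (u v : V3) : vx u = vx v -> vy u = vy v -> vz u = vz v -> u = v.
Proof. destruct u, v; simpl; intros; subst; reflexivity. Qed.

Ltac vexp := unfold vsub, vadd, vopp, vscale, cross, dot, Sv, Qv, Zv, Wplus, Wminus in *; simpl in *.

Lemma I1 X Y al be z a b :
  dot (cross (vadd (vadd (vscale al X) (vscale be Y)) (vscale z (cross X Y))) (vadd (vscale a X) (vscale b Y))) X
  = - z * b * (dot X X * dot Y Y - dot X Y ^ 2).
Proof. destruct X, Y; vexp; ring. Qed.
Lemma I2 X Y al be z a b :
  dot (cross (vadd (vadd (vscale al X) (vscale be Y)) (vscale z (cross X Y))) (vadd (vscale a X) (vscale b Y))) Y
  = z * a * (dot X X * dot Y Y - dot X Y ^ 2).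
Proof. destruct X, Y; vexp; ring. Qed.
Lemma I3 X Y al be z a b :
  dot (cross (vadd (vadd (vscale al X) (vscale be Y)) (vscale z (cross X Y))) (vadd (vscale a X) (vscale b Y))) (cross X Y)
  = (al * b - be * a) * (dot X X * dot Y Y - dot X Y ^ 2).
Proof. destruct X, Y; vexp; ring. Qed.
Lemma I4 X Y al be z n :
  dot (vadd (vadd (vscale al X) (vscale be Y)) (vscale z (cross X Y))) n
  = al * dot X n + be * dot Y n + z * dot (cross X Y) n.
Proof. destruct X, Y, n; vexp; ring. Qed.
Lemma I5 X Y : dot (cross X Y) X = 0.
Proof. destruct X, Y; vexp; ring. Qed.
Lemma I6 X Y : dot (cross X Y) Y = 0.
Proof. destruct X, Y; vexp; ring. Qed.
Lemma I7 X Y : dot (cross X Y) (cross X Y) = dot X X * dot Y Y - dot X Y ^ 2.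
Proof. destruct X, Y; vexp; ring. Qed.
Lemma I8 X Y a b n : dot (vadd (vscale a X) (vscale b Y)) n = a * dot X n + b * dot Y n.
Proof. destruct X, Y, n; vexp; ring. Qed.
Lemma dot_sym u v : dot u v = dot v u.
Proof. destruct u, v; vexp; ring. Qed.

Lemma coefX_eq X Y a b : dot X X = 1 -> dot Y Y = 1 -> dot X Y ^ 2 <> 1 ->
  coefX X Y (vadd (vscale a X) (vscale b Y)) = a.
Proof.
  intros hX hY hc. unfold coefX. rewrite !I8, hX, (dot_sym Y X), hY.
  field. intro; apply hc; lra.
Qed.
Lemma coefY_eq X Y a b : dot X X = 1 -> dot Y Y = 1 -> dot X Y ^ 2 <> 1 ->
  coefY X Y (vadd (vscale a X) (vscale b Y)) = b.
Proof.
  intros hX hY hc. unfold coefY. rewrite !I8, hX, (dot_sym Y X), hY.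
  field. intro; apply hc; lra.
Qed.

Lemma trig alpha : 0 < alpha <= PI / 2 -> 0 <= cos alpha < 1 /\ sin alpha ^ 2 = 1 - cos alpha ^ 2.
Proof.
  intros H. pose proof (sin2_cos2 alpha). unfold Rsqr in H0.
  assert (0 <= cos alpha) by (apply cos_ge_0; pose proof PI_RGT_0; lra).
  assert (0 < sin alpha) by (apply sin_gt_0; pose proof PI_RGT_0; lra).
  split; [split; [lra|nra]|nra].
Qed.

Lemma core (X Y : V3) (alpha k : R) (t1 t2 : R) (u p : R -> V3)
  (hX : dot X X = 1) (hY : dot Y Y = 1)
  (halpha : 0 < alpha <= PI / 2) (hXY : dot X Y = cos alpha)
  (ht : t1 < t2)
  (huC : forall t, t1 <= t <= t2 -> inC X Y (u t))
  (hp_ac : abs_cont_on_V3 t1 t2 p)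
  (hpmp : ae_on t1 t2 (fun t =>
      has_deriv_V3 p t (cross (p t) (u t)) /\
      Ham X Y alpha k (p t) (u t) = 0 /\
      Mis X Y alpha k (p t) 0))
  (al be : R) (z : R -> R)
  (hz : forall t, t1 <= t <= t2 -> p t = vadd (vadd (vscale al X) (vscale be Y)) (vscale (z t) (cross X Y))) :
  (forall t, t1 <= t <= t2 -> z t = 0) /\
  ae_on t1 t2 (fun t => exists a b, u t = vadd (vscale a X) (vscale b Y) /\ Rabs a + Rabs b = 1 /\
      al * b = be * a /\
      - (1 - cos alpha ^ 2) * (Rabs a + k * Rabs b) + a * (al + be * cos alpha) + b * (al * cos alpha + be) = 0).
Proof.
  destruct (trig alpha halpha) as [[hc0 hc1] hs].
  set (c := cos alpha) in *.
  assert (HD : 0 < dot X X * dot Y Y - dot X Y ^ 2) by (rewrite hX, hY, hXY; nra).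
  destruct hpmp as [N [HN HP]].
  assert (Hdx : forall s, t1 <= s <= t2 -> dot (p s) X = al + be * c).
  { intros s Hs. rewrite hz by exact Hs. rewrite I4, I5, hX, (dot_sym Y X), hXY. ring. }
  assert (Hdy : forall s, t1 <= s <= t2 -> dot (p s) Y = al * c + be).
  { intros s Hs. rewrite hz by exact Hs. rewrite I4, I6, hY, hXY. ring. }
  assert (S1 : forall s, t1 < s < t2 -> ~ N s -> z s = 0).
  { intros s Hs HNs. destruct (HP s ltac:(lra) HNs) as [Hd [Hh _]].
    destruct (huC s ltac:(lra)) as [a [b [Hu Hab]]].
    pose proof (deriv_const_on _ t1 t2 s _ _ Hdx Hs (deriv_dot _ _ _ X Hd)) as E1.
    pose proof (deriv_const_on _ t1 t2 s _ _ Hdy Hs (deriv_dot _ _ _ Y Hd)) as E2.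
    rewrite hz in E1, E2 by lra. rewrite Hu in E1, E2. rewrite I1 in E1. rewrite I2 in E2.
    assert (z s * b = 0) by nra. assert (z s * a = 0) by nra.
    apply NNPP; intro Hz.
    assert (a = 0) by (destruct (Rmult_integral _ _ H0); [contradiction|auto]).
    assert (b = 0) by (destruct (Rmult_integral _ _ H); [contradiction|auto]).
    subst. rewrite Rabs_R0 in Hab. lra. }
  set (P0 := vadd (vscale al X) (vscale be Y)).
  assert (S2 : forall t, t1 <= t <= t2 -> z t = 0).
  { intros t0 Ht0.
    destruct hp_ac as [Ax [Ay Az]].
    assert (Hgood : forall s, t1 < s < t2 -> ~ N s -> p s = P0).
    { intros s Hs HNs. rewrite hz by lra. rewrite (S1 s Hs HNs). apply V3eq; unfold P0; vexp; ring. }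
    assert (Hp : p t0 = P0).
    { apply V3eq.
      - apply (ae_const t1 t2 _ N _ t0 Ax HN ht Ht0). intros s Hs HNs. rewrite (Hgood s Hs HNs). reflexivity.
      - apply (ae_const t1 t2 _ N _ t0 Ay HN ht Ht0). intros s Hs HNs. rewrite (Hgood s Hs HNs). reflexivity.
      - apply (ae_const t1 t2 _ N _ t0 Az HN ht Ht0). intros s Hs HNs. rewrite (Hgood s Hs HNs). reflexivity. }
    rewrite hz in Hp by exact Ht0.
    assert (E : dot (vadd P0 (vscale (z t0) (cross X Y))) (cross X Y) = dot P0 (cross X Y)) by (unfold P0 in *; rewrite Hp; reflexivity).
    unfold P0 in E. rewrite I4 in E. unfold P0 in E.
    rewrite I8, (dot_sym X (cross X Y)), (dot_sym Y (cross X Y)), I5, I6, I7 in E.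
    nra. }
  split; [exact S2|].
  exists (fun t => (N t \/ t = t1) \/ t = t2). split.
  { apply null_add_pt, null_add_pt, HN. }
  intros t Ht HNt.
  assert (Hti : t1 < t < t2).
  { split; (apply Rnot_le_lt; intro; apply HNt); [right|left; right]; lra. }
  assert (HNt' : ~ N t) by (intro; apply HNt; left; left; auto).
  destruct (HP t Ht HNt') as [Hd [Hh _]].
  destruct (huC t Ht) as [a [b [Hu Hab]]].
  exists a, b. split; [exact Hu|]. split; [exact Hab|].
  assert (Hdz : forall s, t1 <= s <= t2 -> dot (p s) (cross X Y) = al * dot X (cross X Y) + be * dot Y (cross X Y)).
  { intros s Hs. rewrite hz by exact Hs. rewrite I4, (S2 s Hs). ring. }
  pose proof (deriv_const_on _ t1 t2 t _ _ Hdz Hti (deriv_dot _ _ _ (cross X Y) Hd)) as E3.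
  rewrite hz in E3 by exact Ht. rewrite Hu, I3 in E3.
  split; [nra|].
  unfold Ham, cost in Hh. rewrite Hu in Hh.
  rewrite coefX_eq, coefY_eq in Hh; auto; [| rewrite hXY; nra | rewrite hXY; nra].
  rewrite dot_sym, I8, (dot_sym X), (dot_sym Y), Hdx, Hdy in Hh by lra.
  rewrite hs in Hh. lra.
Qed.

Lemma pa X Y c k z : vadd (vsub (Sv X Y c) (vscale k (Qv X Y c))) (vscale z (Zv X Y))
  = vadd (vadd (vscale (1+k*c) X) (vscale (-(k+c)) Y)) (vscale z (cross X Y)).
Proof. apply V3eq; vexp; ring. Qed.
Lemma pb X Y c k z : vadd (vadd (Sv X Y c) (vscale k (Qv X Y c))) (vscale z (Zv X Y))
  = vadd (vadd (vscale (1-k*c) X) (vscale (k-c) Y)) (vscale z (cross X Y)).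
Proof. apply V3eq; vexp; ring. Qed.
Lemma pc X Y c k z : vadd (vadd (vopp (Sv X Y c)) (vscale k (Qv X Y c))) (vscale z (Zv X Y))
  = vadd (vadd (vscale (-(1+k*c)) X) (vscale (k+c) Y)) (vscale z (cross X Y)).
Proof. apply V3eq; vexp; ring. Qed.
Lemma pd X Y c k z : vadd (vsub (vopp (Sv X Y c)) (vscale k (Qv X Y c))) (vscale z (Zv X Y))
  = vadd (vadd (vscale (-(1-k*c)) X) (vscale (-(k-c)) Y)) (vscale z (cross X Y)).
Proof. apply V3eq; vexp; ring. Qed.

Lemma Rabs_cases a : (0 <= a /\ Rabs a = a) \/ (a < 0 /\ Rabs a = - a).
Proof. destruct (Rcase_abs a). right; split; [lra|apply Rabs_left; lra]. left; split; [lra|apply Rabs_right; lra]. Qed.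

Theorem lemma3p6 (X Y : V3) (alpha k : R) (t1 t2 : R)
  (u p : R -> V3)
  (hX : dot X X = 1) (hY : dot Y Y = 1)
  (halpha : 0 < alpha <= PI / 2) (hXY : dot X Y = cos alpha)
  (hk : 0 <= k <= 1)
  (ht : t1 < t2)
  (huC : forall t, t1 <= t <= t2 -> inC X Y (u t))
  (hu_meas : measurable_on_V3 t1 t2 u)
  (hp_ac : abs_cont_on_V3 t1 t2 p)
  (hpmp : ae_on t1 t2 (fun t =>
      has_deriv_V3 p t (cross (p t) (u t)) /\
      Ham X Y alpha k (p t) (u t) = 0 /\
      Mis X Y alpha k (p t) 0)) :
  let c := cos alpha in
  let S := Sv X Y c in
  let Q := Qv X Y c in
  let Z := Zv X Y in
  let Wp := Wplus X Y c k in
  let Wm := Wminus X Y c k in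
  (* (a) *)
  (forall z : R -> R,
     (forall t, t1 <= t <= t2 -> p t = vadd (vsub S (vscale k Q)) (vscale (z t) Z)) ->
     (forall t, t1 <= t <= t2 -> z t = 0) /\
     ae_on t1 t2 (fun t => u t = vscale (/ (1 + k * c + k + c)) Wp)) /\
  (* (b) *)
  (0 < k -> forall z : R -> R,
     (forall t, t1 <= t <= t2 -> p t = vadd (vadd S (vscale k Q)) (vscale (z t) Z)) ->
     c <= k /\
     (forall t, t1 <= t <= t2 -> z t = 0) /\
     ae_on t1 t2 (fun t => exists l, 0 < l /\ u t = vscale l Wm /\ inC X Y (u t))) /\
  (* analogue of (a) for p = -S + kQ + zZ *)
  (forall z : R -> R,
     (forall t, t1 <= t <= t2 -> p t = vadd (vadd (vopp S) (vscale k Q)) (vscale (z t) Z)) ->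
     (forall t, t1 <= t <= t2 -> z t = 0) /\
     ae_on t1 t2 (fun t => exists l, 0 < l /\ u t = vscale l (vopp Wp) /\ inC X Y (u t))) /\
  (* analogue of (b) for p = -S - kQ + zZ *)
  (0 < k -> forall z : R -> R,
     (forall t, t1 <= t <= t2 -> p t = vadd (vsub (vopp S) (vscale k Q)) (vscale (z t) Z)) ->
     c <= k /\
     (forall t, t1 <= t <= t2 -> z t = 0) /\
     ae_on t1 t2 (fun t => exists l, 0 < l /\ u t = vscale l (vopp Wm) /\ inC X Y (u t))).
Proof.
  intros c S Q Z Wp Wm.
  destruct (trig alpha halpha) as [[hc0 hc1] hs].
  fold c in hc0, hc1.
  assert (hkc : k * c < 1) by nra.
  pose proof (core X Y alpha k t1 t2 u p hX hY halpha hXY ht huC hp_ac hpmp) as Core.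
  fold c in Core.
  split; [|split; [|split]].
  -
    intros z hz.
    destruct (Core (1+k*c) (-(k+c)) z) as [Hz [N [HN HP]]].
    { intros t Ht. rewrite hz by exact Ht. apply pa. }
    split; [exact Hz|]. exists N. split; [exact HN|].
    intros t Ht HNt. destruct (HP t Ht HNt) as [a [b [Hu [Hab [Hc Hh]]]]].
    assert (Hh' : (1 - c^2) * (a - Rabs a - k * (Rabs b + b)) = 0) by (rewrite <- Hh; ring).
    apply Rmult_integral in Hh'. destruct Hh' as [Hh'|Hh']; [nra|].
    assert (Hden : 0 < 1 + k*c + k + c) by nra.
    assert (Ha : a = (1+k*c) / (1 + k*c + k + c) /\ b = -(k+c) / (1 + k*c + k + c)).
    { destruct (Rabs_cases a) as [[A1 A2]|[A1 A2]]; destruct (Rabs_cases b) as [[B1 B2]|[B1 B2]];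
        rewrite A2, B2 in *; try nra.
      - assert (b = 0) by nra. subst b. assert (a = 1) by lra. subst a.
        assert (k = 0) by nra. assert (c = 0) by nra. rewrite H, H0.
        split; field.
      - split; apply (Rmult_eq_reg_r (1 + k*c + k + c)); try lra; field_simplify; nra. }
    destruct Ha as [Ha Hb]. rewrite Hu, Ha, Hb. unfold Wp. apply V3eq; vexp; field; nra.
  -
    intros Hk z hz.
    destruct (Core (1-k*c) (k-c) z) as [Hz Hae].
    { intros t Ht. rewrite hz by exact Ht. apply pb. }
    assert (Key : forall a b, Rabs a + Rabs b = 1 -> (1 - k*c) * b = (k - c) * a ->
       - (1 - c ^ 2) * (Rabs a + k * Rabs b) + a * ((1 - k*c) + (k - c) * c) + b * ((1 - k*c) * c + (k - c)) = 0 ->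
       c <= k /\ 0 < a / (1 - k*c) /\ a = a / (1 - k*c) * (1 - k*c) /\ b = a / (1 - k*c) * (k - c)).
    { intros a b Hab Hc Hh.
      assert (Hh' : (1 - c^2) * ((a - Rabs a) + k * (b - Rabs b)) = 0) by (rewrite <- Hh; ring).
      apply Rmult_integral in Hh'. destruct Hh' as [Hh'|Hh']; [nra|].
      destruct (Rabs_cases a) as [[A1 A2]|[A1 A2]]; destruct (Rabs_cases b) as [[B1 B2]|[B1 B2]];
        rewrite A2, B2 in *; try nra.
      assert (0 < a) by nra.
      split; [nra|]. split; [apply Rdiv_lt_0_compat; nra|].
      split; [field; nra|]. apply (Rmult_eq_reg_r (1 - k*c)); [|lra]. field_simplify; nra. }
    split; [|split; [exact Hz|]].
    + destruct (ae_exists _ _ _ Hae ht) as [t [Ht [a [b [Hu [Hab [Hc Hh]]]]]]].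
      apply (Key a b Hab Hc Hh).
    + destruct Hae as [N [HN HP]]. exists N. split; [exact HN|].
      intros t Ht HNt. destruct (HP t Ht HNt) as [a [b [Hu [Hab [Hc Hh]]]]].
      destruct (Key a b Hab Hc Hh) as [_ [Hl [Ha Hb]]].
      exists (a / (1 - k*c)). split; [exact Hl|]. split; [|apply huC, Ht].
      rewrite Hu. unfold Wm. set (l := a / (1 - k*c)) in *. rewrite Ha at 1. rewrite Hb.
      apply V3eq; vexp; ring.
  -
    intros z hz.
    destruct (Core (-(1+k*c)) (k+c) z) as [Hz [N [HN HP]]].
    { intros t Ht. rewrite hz by exact Ht. apply pc. }
    split; [exact Hz|]. exists N. split; [exact HN|].
    intros t Ht HNt. destruct (HP t Ht HNt) as [a [b [Hu [Hab [Hc Hh]]]]].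
    assert (Hh' : (1 - c^2) * ((- a - Rabs a) + k * (b - Rabs b)) = 0) by (rewrite <- Hh; ring).
    apply Rmult_integral in Hh'. destruct Hh' as [Hh'|Hh']; [nra|].
    assert (A : a < 0 /\ b = (- a / (1 + k*c)) * (k + c)).
    { destruct (Rabs_cases a) as [[A1 A2]|[A1 A2]]; destruct (Rabs_cases b) as [[B1 B2]|[B1 B2]];
        rewrite A2, B2 in *; try nra.
      all: first [ (assert (a = 0) by nra; subst a; assert (b = 0) by nra; lra)
                 | (split; [lra|apply (Rmult_eq_reg_r (1 + k*c)); [replace (- a / (1 + k*c) * (k + c) * (1 + k*c)) with (-a*(k+c)) by (field; nra); nra|nra]]) ]. }
    destruct A as [Ha Hb].
    exists (- a / (1 + k*c)). split; [apply Rdiv_lt_0_compat; nra|]. split; [|apply huC, Ht].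
    rewrite Hu, Hb. unfold Wp. apply V3eq; vexp; field; nra.
  -
    intros Hk z hz.
    destruct (Core (-(1-k*c)) (-(k-c)) z) as [Hz Hae].
    { intros t Ht. rewrite hz by exact Ht. apply pd. }
    assert (Key : forall a b, Rabs a + Rabs b = 1 -> (-(1 - k*c)) * b = (-(k - c)) * a ->
       - (1 - c ^ 2) * (Rabs a + k * Rabs b) + a * (-(1 - k*c) + -(k - c) * c) + b * (-(1 - k*c) * c + -(k - c)) = 0 ->
       c <= k /\ 0 < - a / (1 - k*c) /\ b = - a / (1 - k*c) * (- (k - c))).
    { intros a b Hab Hc Hh.
      assert (Hh' : (1 - c^2) * ((- a - Rabs a) - k * (b + Rabs b)) = 0) by (rewrite <- Hh; ring).
      apply Rmult_integral in Hh'. destruct Hh' as [Hh'|Hh']; [nra|].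
      destruct (Rabs_cases a) as [[A1 A2]|[A1 A2]]; destruct (Rabs_cases b) as [[B1 B2]|[B1 B2]];
        rewrite A2, B2 in *; try nra.
      all: first [ (assert (a = 0) by nra; subst a; assert (b = 0) by nra; lra)
                 | (assert (b = 0) by nra; subst b; assert (a = -1) by lra; subst a;
                    split; [nra|]; split; [apply Rdiv_lt_0_compat; nra|];
                    apply (Rmult_eq_reg_r (1 - k*c)); [field_simplify; nra|nra])
                 | (split; [nra|]; split; [apply Rdiv_lt_0_compat; nra|];
                    apply (Rmult_eq_reg_r (1 - k*c)); [field_simplify; nra|nra]) ]. }
    split; [|split; [exact Hz|]].
    + destruct (ae_exists _ _ _ Hae ht) as [t [Ht [a [b [Hu [Hab [Hc Hh]]]]]]].
      apply (Key a b Hab Hc Hh).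
    + destruct Hae as [N [HN HP]]. exists N. split; [exact HN|].
      intros t Ht HNt. destruct (HP t Ht HNt) as [a [b [Hu [Hab [Hc Hh]]]]].
      destruct (Key a b Hab Hc Hh) as [_ [Hl Hb]].
      exists (- a / (1 - k*c)). split; [exact Hl|]. split; [|apply huC, Ht].
      rewrite Hu, Hb. unfold Wm. apply V3eq; vexp; field; nra.
Qed.
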